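(* Let $m\ge 1$ and let $A_1,\dots,A_m$ be complex matrices, $A_j\in\mathbb{C}^{r_j\times n}$, and let $A=\begin{bmatrix}A_1\\ \vdots\\ A_m\end{bmatrix}\in\mathbb{C}^{r\times n}$ ($r=\sum_j r_j$) have full row rank. Fix $\gamma>0$. Define the block matrices $$D_\gamma=\operatorname{diag}\big(\gamma I+A_1A_1^*,\dots,\gamma I+A_mA_m^*\big),\qquad L=\big(L_{ij}\big)_{i,j=1}^m,\ L_{ij}=\begin{cases}A_iA_j^* & i>j,\\ 0 & i\le j,\end{cases}$$ so that $\gamma I+AA^*=D_\gamma+L+L^*$, and set $$M_\gamma=(D_\gamma+L)^{-1},\quad Q_\gamma=A^*M_\gamma A,\quad B_\gamma=I-Q_\gamma,\quad \tilde B_\gamma=B_\gamma P,\quad R_\gamma=(D_{2\gamma})^{1/2}M_\gamma A,$$ where $P$ is the orthogonal projection of $\mathbb{C}^n$ onto the range $\mathcal{R}(A^* )$, $D_{2\gamma}$ is $D_\gamma$ with $\gamma$ replaced by $2\gamma$, and $(D_{2\gamma})^{1/2}$ is its Hermitian positive definite square root. Let $\sigma_\gamma$ be the smallest nonzero singular value of $R_\gamma$. Then $\sigma_\gamma\le 1$ and, in the spectral norm, $$\|\tilde B_\gamma\|=\sqrt{1-\sigma_\gamma^2}.$$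
   Context: $A^*$ denotes the conjugate transpose. $D_\gamma+L$ is block lower triangular with invertible (Hermitian positive definite) diagonal blocks, so $M_\gamma$ is well defined. $\|\cdot\|$ is the operator 2-norm. *)

(* Defs.v *)
From HB Require Import structures.
From mathcomp Require Import all_boot all_order all_algebra.
Set Implicit Arguments. Unset Strict Implicit. Unset Printing Implicit Defensive.
Import Order.TTheory GRing.Theory Num.Theory.
Local Open Scope ring_scope.

(* Complex scalars: any numClosedFieldType C (e.g. algC, or R[i]); conjugation
   is Num.conj, and "real" quantities are elements of C lying in Num.real. *)
Section Defs.
Variable C : numClosedFieldType.

Definition ctmx (p q : nat) (M : 'M[C]_(p, q)) : 'M[C]_(q, p) :=
  (map_mx Num.conj M)^T.

Definition vnorm (p : nat) (x : 'cV[C]_p) : C := sqrtC (\sum_i `|x i 0| ^+ 2).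

Definition is_opnorm (p q : nat) (B : 'M[C]_(p, q)) (s : C) : Prop :=
  [/\ 0 <= s,
      forall x : 'cV[C]_q, vnorm (B *m x) <= s * vnorm x
    & forall t, 0 <= t -> (forall x : 'cV[C]_q, vnorm (B *m x) <= t * vnorm x) -> s <= t].

Definition hermitian (p : nat) (M : 'M[C]_p) : Prop := ctmx M = M.

Definition herm_posdef (p : nat) (M : 'M[C]_p) : Prop :=
  hermitian M /\ forall x : 'cV[C]_p, x != 0 -> 0 < (ctmx x *m M *m x) 0 0.

(* P is the orthogonal projection onto the column space (range) of X *)
Definition orth_proj_onto (p k : nat) (P : 'M[C]_p) (X : 'M[C]_(p, k)) : Prop :=
  [/\ hermitian P, P *m P = P & (P^T == X^T)%MS].

Definition sing_val (p q : nat) (M : 'M[C]_(p, q)) (s : C) : Prop :=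
  0 <= s /\ eigenvalue (ctmx M *m M) (s ^+ 2).

Definition smallest_nz_sing_val (p q : nat) (M : 'M[C]_(p, q)) (s : C) : Prop :=
  [/\ 0 < s, sing_val M s & forall t, 0 < t -> sing_val M t -> s <= t].

Variables (m n : nat) (r : 'I_m -> nat) (A : forall j : 'I_m, 'M[C]_(r j, n)).

Definition Astack : 'M[C]_(\sum_j r j, n) := \mxcol_(j < m) A j.

Definition Dmat (g : C) : 'M[C]_(\sum_j r j) :=
  \mxdiag_(i < m) (g%:M + A i *m ctmx (A i)).

Definition Lmat : 'M[C]_(\sum_j r j) :=
  \mxblock_(i < m, j < m) (if (j < i)%N then A i *m ctmx (A j) else 0).

Definition Mmat (g : C) : 'M[C]_(\sum_j r j) := invmx (Dmat g + Lmat).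
Definition Qmat (g : C) : 'M[C]_n := ctmx Astack *m Mmat g *m Astack.
Definition Bmat (g : C) : 'M[C]_n := 1%:M - Qmat g.
End Defs.

(* Main.v *)
Require Import Defs.
From HB Require Import structures.
From mathcomp Require Import all_boot all_order all_algebra.
Import Order.TTheory GRing.Theory Num.Theory.
Local Open Scope ring_scope.
Set Implicit Arguments. Unset Strict Implicit. Unset Printing Implicit Defensive.
Section S.
Variable C : numClosedFieldType.
Lemma ctmxM p q s (X : 'M[C]_(p,q)) (Y : 'M[C]_(q,s)) : ctmx (X *m Y) = ctmx Y *m ctmx X.
Proof. by rewrite /ctmx map_mxM trmx_mul. Qed.
Lemma ctmxD p q (X Y : 'M[C]_(p,q)) : ctmx (X + Y) = ctmx X + ctmx Y.
Proof. by rewrite /ctmx map_mxD linearD. Qed.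
Lemma ctmxN p q (X : 'M[C]_(p,q)) : ctmx (- X) = - ctmx X.
Proof. by rewrite /ctmx map_mxN linearN. Qed.
Lemma ctmxB p q (X Y : 'M[C]_(p,q)) : ctmx (X - Y) = ctmx X - ctmx Y.
Proof. by rewrite ctmxD ctmxN. Qed.
Lemma ctmxK p q (X : 'M[C]_(p,q)) : ctmx (ctmx X) = X.
Proof. by apply/matrixP=> i j; rewrite !mxE conjCK. Qed.
Lemma ctmx_scalar p (a : C) : ctmx (a%:M : 'M_p) = (Num.conj a)%:M.
Proof. by apply/matrixP=> i j; rewrite !mxE eq_sym; case: eqP => _; rewrite ?mulr1n ?mulr0n ?conjC0. Qed.
Lemma ctmx0 p q : ctmx (0 : 'M[C]_(p,q)) = 0.
Proof. by apply/matrixP=> i j; rewrite !mxE conjC0. Qed.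
Lemma ctmx_mxblock p q (p_ : 'I_p -> nat) (q_ : 'I_q -> nat) (B : forall i j, 'M[C]_(p_ i, q_ j)) :
  ctmx (\mxblock_(i, j) B i j) = \mxblock_(i, j) ctmx (B j i).
Proof. by apply/matrixP => i j; rewrite !mxE. Qed.
Lemma ctmx_mxcol p k (p_ : 'I_p -> nat) (B : forall i, 'M[C]_(p_ i, k)) :
  ctmx (\mxcol_i B i) = \mxrow_i ctmx (B i).
Proof. by apply/matrixP => i j; rewrite !mxE. Qed.
Lemma key m n (r : 'I_m -> nat) (A : forall j : 'I_m, 'M[C]_(r j, n)) (g : C) :
  Num.conj g = g ->
  Dmat A (2*g) + Astack A *m ctmx (Astack A) =
  (Dmat A g + Lmat A) + ctmx (Dmat A g + Lmat A).
Proof.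
move=> cg.
have -> : Dmat A (2*g) = g%:M + Dmat A g.
  rewrite /Dmat -mxdiagZ -mxdiagD; apply: eq_mxdiag => i.
  by rewrite addrA -raddfD /= -mulr2n mulr_natl.
rewrite /Astack ctmx_mxcol mul_mxcol_mxrow ctmxD /Dmat /Lmat -mxdiagZ /mxdiag.
rewrite !ctmx_mxblock -!mxblockD; apply: eq_mxblock => i j.
case: (ltngtP i j) => hij.
- have nij : (i == j) = false by apply/eqP => e; move: hij; rewrite e ltnn.
  rewrite nij eq_sym nij ctmxM ctmxK ctmx0.
  by rewrite !add0r ?addr0.
- have nij : (i == j) = false by apply/eqP => e; move: hij; rewrite e ltnn.
  rewrite nij eq_sym nij ctmx0.
  by rewrite !add0r ?addr0.
- have e : i = j by apply: val_inj.
  subst j; rewrite eqxx !conform_mx_id ctmxD ctmx_scalar cg ctmxM ctmxK.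
  by rewrite ctmx0 ?addr0 -!addrA; congr (_ + _); rewrite [RHS]addrCA.
Qed.
Definition sq p (x : 'cV[C]_p) : C := (ctmx x *m x) 0 0.
Lemma sqE p (x : 'cV[C]_p) : sq x = \sum_i `|x i 0| ^+ 2.
Proof. rewrite /sq !mxE; apply: eq_bigr => i _; by rewrite !mxE normCK mulrC. Qed.
Lemma sq_ge0 p (x : 'cV[C]_p) : 0 <= sq x.
Proof. by rewrite sqE; apply: sumr_ge0 => i _; rewrite exprn_ge0. Qed.
Lemma sq_eq0 p (x : 'cV[C]_p) : sq x = 0 -> x = 0.
Proof.
rewrite sqE => /psumr_eq0P h; have {}h := h (fun _ _ => exprn_ge0 _ (normr_ge0 _)); apply/matrixP => i j; rewrite ord1 mxE.
have /eqP := h i isT.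
by rewrite expf_eq0 /= normr_eq0 => /eqP.
Qed.
Lemma sq_gt0 p (x : 'cV[C]_p) : x != 0 -> 0 < sq x.
Proof. by move=> nx; rewrite lt_def sq_ge0 andbT; apply/eqP => /sq_eq0 /eqP; rewrite (negbTE nx). Qed.
Lemma vnormE p (x : 'cV[C]_p) : vnorm x = sqrtC (sq x).
Proof. by rewrite sqE. Qed.
Lemma entB p q (X Y : 'M[C]_(p,q)) i j : (X - Y) i j = X i j - Y i j.
Proof. by rewrite !mxE. Qed.
Lemma entD p q (X Y : 'M[C]_(p,q)) i j : (X + Y) i j = X i j + Y i j.
Proof. by rewrite !mxE. Qed.
Lemma entN p q (X : 'M[C]_(p,q)) i j : (- X) i j = - X i j.
Proof. by rewrite !mxE. Qed.
Lemma entZ p q a (X : 'M[C]_(p,q)) i j : (a *: X) i j = a * X i j.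
Proof. by rewrite !mxE. Qed.
Lemma ctmxZ p q a (X : 'M[C]_(p,q)) : ctmx (a *: X) = Num.conj a *: ctmx X.
Proof. by apply/matrixP => i j; rewrite !mxE rmorphM. Qed.
Lemma ctmx1 p : ctmx (1%:M : 'M[C]_p) = 1%:M.
Proof. by rewrite ctmx_scalar conjC1. Qed.
Lemma tctmx p q (X : 'M[C]_(p,q)) : map_mx Num.conj X^T = ctmx X.
Proof. by rewrite /ctmx map_trmx. Qed.
Section Abs.
Variables (k n : nat) (As : 'M[C]_(k,n)) (N S : 'M[C]_k).
Hypothesis hS : herm_posdef S.
Hypothesis hN : S *m S + As *m ctmx As = N + ctmx N.

Lemma S_inj (w : 'cV_k) : S *m w = 0 -> w = 0.
Proof.
move=> Sw; apply/eqP; apply/negP => /negP nw.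
have := (proj2 hS) w nw; rewrite -mulmxA Sw mulmx0 mxE ltxx //.
Qed.

Lemma sqS (w : 'cV_k) : sq (S *m w) = (ctmx w *m (S *m S) *m w) 0 0.
Proof. by rewrite /sq ctmxM (proj1 hS) !mulmxA. Qed.

Lemma N_unit : N \in unitmx.
Proof.
rewrite -row_free_unit -kermx_eq0; apply/eqP/row_matrixP => i; rewrite row0.
set v := row i (kermx N).
have vN : v *m N = 0 by rewrite /v -row_mul mulmx_ker row0.
set w := ctmx v.
have e : (ctmx w *m (S *m S + As *m ctmx As) *m w) 0 0 = 0.
  rewrite hN mulmxDr mulmxDl entD /w ctmxK vN mul0mx mxE add0r.
  have -> : v *m ctmx N *m ctmx v = ctmx (v *m N *m ctmx v) by rewrite !ctmxM ctmxK mulmxA.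
  by rewrite vN mul0mx ctmx0 mxE.
move: e; rewrite mulmxDr mulmxDl entD -sqS.
have -> : (ctmx w *m (As *m ctmx As) *m w) 0 0 = sq (ctmx As *m w).
  by rewrite /sq ctmxM ctmxK !mulmxA.
move/eqP; rewrite paddr_eq0 ?sq_ge0 // => /andP [/eqP /sq_eq0 /S_inj w0 _].
by rewrite -[v]ctmxK -/w w0 ctmx0.
Qed.

Let M := invmx N.
Let R := S *m M *m As.
Let H := ctmx R *m R.
Let B := 1%:M - ctmx As *m M *m As.

Lemma NM : N *m M = 1%:M. Proof. exact: mulmxV N_unit. Qed.
Lemma MN : M *m N = 1%:M. Proof. exact: mulVmx N_unit. Qed.

Lemma BB : ctmx B *m B = 1%:M - H.
Proof.
have hN' : S *m S = N + ctmx N - As *m ctmx As by rewrite -hN addrK.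
have cMN : ctmx N *m ctmx M = 1%:M by rewrite -ctmxM MN ctmx1.
have e1 : ctmx M *m N *m M = ctmx M by rewrite -mulmxA NM mulmx1.
have e2 : ctmx M *m ctmx N *m M = M by rewrite -ctmxM NM ctmx1 mul1mx.
rewrite /H /R /B !ctmxM (proj1 hS) ctmxB ctmx1 !ctmxM ctmxK !mulmxA.
have -> : ctmx As *m ctmx M *m S *m S *m M *m As =
  ctmx As *m (ctmx M *m (S *m S) *m M) *m As by rewrite !mulmxA.
rewrite hN'.
have -> : ctmx M *m (N + ctmx N - As *m ctmx As) *m M =
   ctmx M + M - ctmx M *m As *m ctmx As *m M.
  by rewrite !mulmxDr mulmxN !mulmxDl mulNmx e1 e2 !mulmxA.
rewrite !(mulmxDr, mulmxDl, mulmxN, mulNmx) !mul1mx !mulmx1 !mulmxA.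
by rewrite !opprD !opprK !addrA.
Qed.
Lemma H_herm : ctmx H = H.
Proof. by rewrite /H ctmxM ctmxK. Qed.

Lemma sqRH (y : 'cV_n) : sq (R *m y) = (ctmx y *m H *m y) 0 0.
Proof. by rewrite /sq /H ctmxM !mulmxA. Qed.

Lemma sqB (y : 'cV_n) : sq (B *m y) = sq y - sq (R *m y).
Proof.
rewrite sqRH /sq ctmxM !mulmxA -(mulmxA (ctmx y) (ctmx B)) BB.
by rewrite mulmxDr mulmxN mulmx1 mulmxDl mulNmx entD entN /H /R !mulmxA.
Qed.

Lemma R_ker (y : 'cV_n) : R *m y = 0 -> As *m y = 0.
Proof.
rewrite /R -!mulmxA => /S_inj My.
by rewrite -[As *m y]mul1mx -NM -mulmxA My mulmx0.
Qed.

Lemma spec_bound (s : C) (z : 'cV_k) : 0 <= s ->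
  (forall t, 0 < t -> eigenvalue H (t ^+ 2) -> s <= t) ->
  s ^+ 2 * sq (ctmx As *m z) <= sq (R *m (ctmx As *m z)).
Proof.
move=> s0 hs.
set U := spectralmx H; set d := spectral_diag H.
have Hn : H \is normalmx by apply/normalmxP; rewrite tctmx H_herm.
have HE := orthomx_spectralP Hn.
have Uu : U \is unitarymx := spectral_unitarymx H.
have UU : U *m ctmx U = 1%:M by move/unitarymxP: Uu; rewrite tctmx.
have UU' : ctmx U *m U = 1%:M := mulmx1C UU.
rewrite invmx_unitary // tctmx -/U -/d in HE.
set y := ctmx As *m z; set w := U *m y.
have sqy : sq y = sq w by rewrite /sq /w ctmxM !mulmxA -(mulmxA _ (ctmx U)) UU' mulmx1.
have sqRy : sq (R *m y) = \sum_j d 0 j * `|w j 0| ^+ 2.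
  rewrite sqRH HE.
  have -> : ctmx y *m (ctmx U *m diag_mx d *m U) *m y = ctmx w *m diag_mx d *m w.
    by rewrite /w ctmxM !mulmxA.
  rewrite mul_mx_diag !mxE; apply: eq_bigr => j _; rewrite !mxE normCK.
  by rewrite (mulrC _ (d 0 j)) -mulrA; congr (_ * _); rewrite mulrC.
rewrite sqRy sqy sqE mulr_sumr; apply: ler_sum => j _.
have [wj0|nwj0] := eqVneq (w j 0) 0.
  by rewrite wj0 normr0 expr0n /= !mulr0.
set u := row j U.
have uH : u *m H = d 0 j *: u.
  rewrite HE !mulmxA /u -row_mul UU row1 -rowE row_diag_mx -scalemxAl -rowE //.
have uu : (u *m ctmx u) 0 0 = 1.
  have -> : (u *m ctmx u) 0 0 = (U *m ctmx U) j j.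
    by rewrite !mxE; apply: eq_bigr => l _; rewrite !mxE.
  by rewrite UU mxE eqxx.
have dj : d 0 j = sq (R *m ctmx u).
  by rewrite sqRH ctmxK uH -scalemxAl entZ uu mulr1.
have [dj0|ndj0] := eqVneq (d 0 j) 0.
  exfalso; move: nwj0; rewrite dj0 in dj.
  have /R_ker Au : R *m ctmx u = 0 by apply: sq_eq0.
  have -> : w j 0 = (ctmx (As *m ctmx u) *m z) 0 0.
    rewrite ctmxM ctmxK /w /y !mulmxA -/u.
    by rewrite /u -!row_mul [RHS]mxE.
  by rewrite Au ctmx0 mul0mx mxE eqxx.
have dpos : 0 < d 0 j by rewrite lt_def ndj0 dj sq_ge0.
have st : s <= sqrtC (d 0 j).
  apply: hs; first by rewrite sqrtC_gt0.
  rewrite sqrtCK; apply/eigenvalueP; exists u => //.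
  by apply/eqP => u0; move: uu; rewrite u0 mul0mx mxE => /eqP; rewrite eq_sym oner_eq0.
have s2 : s ^+ 2 <= d 0 j.
  by rewrite -[d 0 j]sqrtCK ler_pXn2r // nnegrE ?sqrtC_ge0 ?(ltW dpos).
by rewrite ler_wpM2r // exprn_ge0.
Qed.
End Abs.
Lemma sq_proj p (P : 'M[C]_p) (x : 'cV_p) : ctmx P = P -> P *m P = P ->
  sq x = sq (P *m x) + sq ((1%:M - P) *m x).
Proof.
move=> Ph PP.
have e : ctmx (1%:M - P) *m (1%:M - P) = 1%:M - P.
  rewrite ctmxB ctmx1 Ph !(mulmxDr, mulmxDl, mulmxN, mulNmx) !mul1mx !mulmx1 PP.
  by rewrite subrr addr0.
rewrite /sq !ctmxM !mulmxA -(mulmxA _ (ctmx P)) Ph PP.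
rewrite -(mulmxA _ (ctmx (1%:M - P))) e -entD -mulmxDl -mulmxDr.
by rewrite addrC subrK mulmx1.
Qed.
End S.

Unset Implicit Arguments.
Set Strict Implicit.

Theorem lemma3p1 (C : numClosedFieldType) (m n : nat) (r : 'I_m -> nat)
    (A : forall j : 'I_m, 'M[C]_(r j, n)) (gamma : C) :
  (0 < m)%N -> 0 < gamma ->
  row_free (Astack A) ->
  forall (P : 'M[C]_n) (S : 'M[C]_(\sum_j r j)) (sigma : C),
    orth_proj_onto P (ctmx (Astack A)) ->
    herm_posdef S -> S *m S = Dmat A (2 * gamma) ->
    smallest_nz_sing_val (S *m Mmat A gamma *m Astack A) sigma ->
    sigma <= 1 /\ is_opnorm (Bmat A gamma *m P) (sqrtC (1 - sigma ^+ 2)).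
Proof.
move=> _ g0 _ P S sigma [Ph PP Pr] hS hSS [s0 [_ hsv] hmin].
set As := Astack A; set N := Dmat A gamma + Lmat A.
have cg : Num.conj gamma = gamma := geC0_conj (ltW g0).
have hN : S *m S + As *m ctmx As = N + ctmx N by rewrite hSS key.
have BE : Bmat A gamma = 1%:M - ctmx As *m invmx N *m As by [].
have ME : Mmat A gamma = invmx N by [].
rewrite BE; rewrite ME in hsv hmin.
set R := S *m invmx N *m As in hsv hmin *.
set X := ctmx As.
have [/submxP [W PW] /submxP [V XV]] := andP Pr.
have PX : P *m X = X.
  have -> : X = P *m V^T by rewrite -[X]trmxK XV trmx_mul trmxK.
  by rewrite mulmxA PP.
have PrX (x : 'cV_n) : P *m x = X *m (W^T *m x).
  by rewrite mulmxA -[P]trmxK PW trmx_mul trmxK.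
have hmin' : forall t, 0 < t -> eigenvalue (ctmx R *m R) (t ^+ 2) -> sigma <= t.
  by move=> t t0 ev; apply: hmin => //; split => //; apply: ltW.
have [v vH v0] := eigenvalueP hsv.
set x := ctmx v.
have x0 : x != 0 by apply: contra v0 => /eqP x0; rewrite -[v]ctmxK -/x x0 ctmx0.
have s20 : 0 <= sigma ^+ 2 by rewrite exprn_ge0 // ltW.
have Hx : ctmx R *m R *m x = sigma ^+ 2 *: x.
  by rewrite /x -(H_herm As N S) -ctmxM vH ctmxZ geC0_conj.
have sgt0 : 0 < sigma ^+ 2 by rewrite exprn_gt0.
have Px : P *m x = x.
  have -> : x = X *m (sigma ^- 2 *: (ctmx (S *m invmx N) *m (R *m x))).
    have HR : ctmx R = X *m ctmx (S *m invmx N) by rewrite /R ctmxM.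
    have e : X *m (ctmx (S *m invmx N) *m (R *m x)) = ctmx R *m R *m x by rewrite HR !mulmxA.
    by rewrite -scalemxAr e Hx scalerA mulVf ?scale1r // gt_eqF //.
  by rewrite mulmxA PX.
have sqBx : sq ((1%:M - X *m invmx N *m As) *m x) = (1 - sigma ^+ 2) * sq x.
  rewrite (sqB hS hN) -/R (sqRH As N S) -/R -mulmxA Hx -scalemxAr entZ -/(sq x).
  by rewrite mulrBl mul1r.
have sqx : 0 < sq x := sq_gt0 x0.
have h1 : 0 <= 1 - sigma ^+ 2.
  by rewrite -(pmulr_lge0 _ sqx) -sqBx sq_ge0.
split.
  have : sigma ^+ 2 <= 1 ^+ 2 by rewrite expr1n -subr_ge0.
  by rewrite ler_pXn2r // ?nnegrE ?ler01 ?(ltW s0).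
have sqrt1 : 0 <= sqrtC (1 - sigma ^+ 2) by rewrite sqrtC_ge0.
split => //.
- move=> y; rewrite vnormE vnormE -mulmxA.
  have e1 : sq ((1%:M - X *m invmx N *m As) *m (P *m y)) <= (1 - sigma ^+ 2) * sq y.
    rewrite (sqB hS hN) -/R PrX.
    have sb := spec_bound hS hN (W^T *m y) (ltW s0) hmin'.
    rewrite -/R -/X in sb.
    apply: (le_trans (y := sq (X *m (W^T *m y)) - sigma ^+ 2 * sq (X *m (W^T *m y)))).
      by rewrite lerD2l lerN2.
    rewrite -{1}[sq (X *m _)]mul1r -mulrBl ler_wpM2l // -PrX.
    by rewrite (sq_proj y Ph PP) lerDl sq_ge0.
  rewrite -sqrtCM ?nnegrE ?sq_ge0 // ler_sqrtC // nnegrE ?sq_ge0 //.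
  by rewrite mulr_ge0 ?sq_ge0.
- move=> t t0 ht.
  have := ht x; rewrite -mulmxA Px !vnormE sqBx sqrtCM ?nnegrE ?sq_ge0 //.
  by rewrite ler_pM2r // sqrtC_gt0.
Qed.
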